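(* Let $0<r'<r<1$. The map of condensed abelian groups $\theta_{r'}:\mathbb{Z}((T))_r\to\underline{\mathbb{R}}$, $\sum a_nT^n\mapsto\big(s\mapsto\sum a_n(s)(r')^n\big)$, is an epimorphism; i.e. for every extremally disconnected set $S$ the map $\mathbb{Z}((T))_r(S)\to C(S,\mathbb{R})$ is surjective.
   Context: Extremally disconnected sets are the projective objects in the category of compact Hausdorff spaces. For $0<r<1$ and extremally disconnected $S$, $\mathbb{Z}((T))_r(S)$ is the ring of formal sums $\sum_{n\ge k}a_nT^n$ (some $k\in\mathbb{Z}$) with $a_n\in C(S,\mathbb{Z})$ such that there is $c>0$ with $\sum_n|a_n(s)|r^n\le c$ for all $s\in S$; this defines a condensed ring $\mathbb{Z}((T))_r$. $\underline{\mathbb{R}}$ is $S\mapsto C(S,\mathbb{R})$. *)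

(* Defs.v *)
From HB Require Import structures.
From mathcomp Require Import all_boot all_order all_algebra.
From mathcomp Require Import all_classical all_reals all_analysis.
Set Implicit Arguments. Unset Strict Implicit. Unset Printing Implicit Defensive.
Import Order.TTheory GRing.Theory Num.Theory.
Import numFieldNormedType.Exports.
Local Open Scope classical_set_scope.
Local Open Scope ring_scope.

Definition extremally_disconnected (S : topologicalType) : Prop :=
  forall U : set S, open U -> open (closure U).

(* Continuous maps S -> Z (Z discrete) = locally constant maps. *)
Definition locally_constant (S : topologicalType) (f : S -> int) : Prop :=
  forall s : S, \forall t \near s, f t = f s.

Definition win_sum (R : realType) (b : int -> R) (x : R) (N : nat) : R :=
  \sum_(i < (N + N)%N) b ((i : nat)%:Z - N%:Z) * x ^ ((i : nat)%:Z - N%:Z).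

(* a : int -> C(S,Z) is an element of Z((T))_r(S):
   coefficients locally constant, bounded below support, and
   sum_n |a_n(s)| r^n <= c for all s (nonneg. terms: bounded partial sums). *)
Definition ZLaurent_r (R : realType) (r : R) (S : topologicalType)
    (a : int -> S -> int) : Prop :=
  (forall n, locally_constant (a n)) /\
  (exists k : int, forall n : int, n < k -> forall s, a n s = 0) /\
  (exists c : R, forall (s : S) (N : nat),
      win_sum (fun n => `|(a n s)%:~R|) r N <= c).

(* Main.v *)
Require Import Defs.
From HB Require Import structures.
From mathcomp Require Import all_boot all_order all_algebra.
From mathcomp Require Import all_classical all_reals all_analysis.
From mathcomp Require Import zify ring lra.
Set Implicit Arguments. Unset Strict Implicit. Unset Printing Implicit Defensive.
Import Order.TTheory GRing.Theory Num.Theory.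
Import numFieldNormedType.Exports.
Local Open Scope classical_set_scope.
Local Open Scope ring_scope.

Lemma lc_sum (S : topologicalType) n (F : 'I_n -> S -> int) :
  (forall j, locally_constant (F j)) ->
  locally_constant (fun s => \sum_(j < n) F j s).
Proof.
move=> HF s.
have : \forall t \near s, forall j, F j t = F j s.
  by apply: filter_forall => j; exact: HF.
by apply: filterS => t Ht; apply: eq_bigr => j _; exact: Ht.
Qed.

Definition ind (S : topologicalType) (V : set S) (s : S) : int :=
  if `[< V s >] then 1 else 0.

Lemma lc_ind (S : topologicalType) (V : set S) :
  open V -> closed V -> locally_constant (ind V).
Proof.
move=> oV cV s; rewrite /ind.
case: (pselect (V s)) => Vs.
  rewrite asboolT //.
  have : nbhs s V by apply: open_nbhs_nbhs; split.
  by apply: filterS => t Vt; rewrite asboolT.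
rewrite asboolF //.
have : nbhs s (~` V) by apply: open_nbhs_nbhs; split => //; exact: closed_openC.
by apply: filterS => t Vt; rewrite asboolF.
Qed.

Lemma lc_cont (R : realType) (S : topologicalType) (a : S -> int) :
  locally_constant a -> continuous (fun s => (a s)%:~R : R).
Proof.
move=> Ha s; apply: cvg_near_cst.
by apply: filterS (Ha s) => t ->.
Qed.

Lemma count_bound (R : realType) (I : nat -> R) (y : R) (L : nat) :
  (forall j, (j < L)%N -> (I j = 0 \/ I j = 1) /\
     ((j%:R < y) -> I j = 1) /\ (y < j%:R -> I j = 0)) ->
  [/\ 0 <= \sum_(j < L) I j <= L%:R,
      (L%:R <= y -> \sum_(j < L) I j = L%:R),
      (y <= L%:R -> y - 1 <= \sum_(j < L) I j) &
      (0 <= y -> \sum_(j < L) I j <= y + 1)].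
Proof.
elim: L => [|L IH] HI.
  rewrite big_ord0; split => //; first by rewrite lexx.
  by move=> ?; lra.
  by move=> ?; lra.
have [/andP[A1 A2] B C D] := IH (fun j hj => HI j (ltnW hj)).
have [HL1 [HL2 HL3]] := HI L (ltnSn L).
rewrite big_ord_recr /= -natr1.
split.
- by case: HL1 => ->; apply/andP; split; lra.
- move=> hy; rewrite B; last by lra.
  by rewrite HL2 //; lra.
- move=> hy; case: (lerP y L%:R) => hyL.
    by have := C hyL; case: HL1 => ->; lra.
  by rewrite B ?HL2; lra.
- move=> hy; case: (ltrP y L%:R) => hyL.
    by rewrite HL3 //; have := D hy; lra.
  by case: HL1 => ->; lra.
Qed.

Definition approx (R : realType) (S : topologicalType) (M : nat) (g : S -> R)
  (s : S) : int :=
  \sum_(j < (M + M)%N)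
     ind (closure [set t | ((j : nat)%:R - M%:R : R) < g t]) s - M%:Z.

Lemma approx_lc (R : realType) (S : topologicalType) (M : nat) (g : S -> R) :
  extremally_disconnected S -> continuous g -> locally_constant (approx M g).
Proof.
move=> hED hg s.
suff H : locally_constant (fun s => \sum_(j < (M + M)%N)
     ind (closure [set t | ((j : nat)%:R - M%:R : R) < g t]) s).
  by apply: filterS (H s) => t /= Ht; rewrite /approx Ht.
apply: lc_sum => j; apply: lc_ind; last exact: closed_closure.
apply: hED.
have -> : [set t | ((j : nat)%:R - M%:R : R) < g t] =
   g @^-1` [set x | ((j : nat)%:R - M%:R : R) < x] by [].
by apply: open_comp => // x _; exact: hg.
Qed.

Lemma approx_bound (R : realType) (S : topologicalType) (M : nat) (g : S -> R)
  (s : S) : continuous g -> `|g s| <= M%:R ->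
  `|g s - (approx M g s)%:~R| <= 1.
Proof.
move=> hg hgs.
pose U (j : nat) := [set t | ((j : nat)%:R - M%:R : R) < g t].
pose I (j : nat) : R := (ind (closure (U j)) s)%:~R.
have HI : forall j, (j < M + M)%N -> (I j = 0 \/ I j = 1) /\
     ((j%:R < g s + M%:R) -> I j = 1) /\ (g s + M%:R < j%:R -> I j = 0).
  move=> j _; split; [|split].
  - by rewrite /I /ind; case: asboolP => _; [right|left].
  - move=> hj; rewrite /I /ind asboolT //.
    by apply: subset_closure; rewrite /U /=; lra.
  - move=> hj; rewrite /I /ind asboolF //.
    have cC : closed (g @^-1` [set x | ((j : nat)%:R - M%:R : R) <= x]).
      by apply: closed_comp => [x _|]; [exact: hg|exact: closed_ge].
    move=> hcl.
    have sub : closure (U j) `<=` g @^-1` [set x | ((j : nat)%:R - M%:R : R) <= x].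
      rewrite [X in _ `<=` X](closure_id _).1 //.
      by apply: closureS => t; rewrite /U /= => /ltW.
    by have := sub _ hcl; rewrite /=; lra.
have [_ _ C D] := count_bound HI.
have E : (approx M g s)%:~R = \sum_(j < M + M) I j - M%:R :> R.
  by rewrite /approx rmorphB /= rmorph_sum /=.
rewrite E; move: hgs; rewrite !ler_norml => /andP[h1 h2].
have h3 := C ltac:(rewrite natrD; lra).
have h4 := D ltac:(lra).
apply/andP; split; lra.
Qed.

Fixpoint useq (R : realType) (S : topologicalType) (M : nat) (rr : R)
  (f : S -> R) (n : nat) : S -> R :=
  match n with
  | 0 => f
  | n'.+1 => fun s => (useq M rr f n' s - (approx M (useq M rr f n') s)%:~R) / rr
  end.

Lemma useq_cont (R : realType) (S : topologicalType) (M : nat) (rr : R)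
  (f : S -> R) n : extremally_disconnected S -> continuous f ->
  continuous (useq M rr f n).
Proof.
move=> hED hf; elim: n => [|n IH] //= s.
have h1 := continuousB (IH s) (@lc_cont R S _ (approx_lc M hED IH) s).
exact: (continuousM h1 (@cst_continuous S R rr^-1 s)).
Qed.

Lemma useq_bound (R : realType) (S : topologicalType) (M : nat) (rr : R)
  (f : S -> R) : continuous f -> extremally_disconnected S -> 0 < rr ->
  rr^-1 <= M%:R -> (forall s, `|f s| <= M%:R) ->
  forall n s, `|useq M rr f n s| <= M%:R.
Proof.
move=> hf hED hr hM hfM; elim => [|n IH] s //=.
have := approx_bound (s:=s) (useq_cont (M:=M) (rr:=rr) (n:=n) hED hf) (IH s).
move=> h; rewrite normrM normfV (gtr0_norm hr).
apply: le_trans hM; rewrite -[X in _ <= X]mul1r.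
by apply: ler_wpM2r => //; rewrite invr_ge0 ltW.
Qed.

Lemma dig_bound (R : realType) (S : topologicalType) (M : nat) (rr : R)
  (f : S -> R) : continuous f -> extremally_disconnected S -> 0 < rr ->
  rr^-1 <= M%:R -> (forall s, `|f s| <= M%:R) ->
  forall n s, `|(approx M (useq M rr f n) s)%:~R| <= M%:R + 1 :> R.
Proof.
move=> hf hED hr hM hfM n s.
have h1 := useq_bound hf hED hr hM hfM n s.
have := approx_bound (s:=s) (useq_cont (M:=M) (rr:=rr) (n:=n) hED hf) h1.
move: h1; rewrite !ler_norml => /andP[a b] /andP[c d].
apply/andP; split; lra.
Qed.

Lemma partial_sum (R : realType) (S : topologicalType) (M : nat) (rr : R)
  (f : S -> R) : 0 < rr -> forall N s,
  \sum_(j < N) (approx M (useq M rr f j) s)%:~R * rr ^+ j =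
  f s - rr ^+ N * useq M rr f N s.
Proof.
move=> hr; elim => [|N IH] s.
  by rewrite big_ord0 expr0 mul1r subrr.
rewrite big_ord_recr /= IH exprS.
have hr0 : rr != 0 by rewrite gt_eqF.
by field.
Qed.

Lemma win_sum_pos (R : realType) (b : int -> R) (x : R) (N : nat) :
  (forall z : int, z < 0 -> b z = 0) ->
  win_sum b x N = \sum_(j < N) b j * x ^+ j.
Proof.
move=> hb; rewrite /win_sum big_split_ord /= big1 ?add0r; last first.
  move=> i _; rewrite hb ?mul0r //=.
  have := ltn_ord i; rewrite -ltz_nat; lia.
apply: eq_bigr => j _ /=.
have -> : ((N + j)%N%:Z - N%:Z) = j%:Z by rewrite PoszD addrC addKr.
by rewrite exprnP.
Qed.

Lemma geom_bound (R : realType) (r : R) (N : nat) :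
  0 <= r -> r < 1 -> \sum_(j < N) r ^+ j <= (1 - r)^-1.
Proof.
move=> h0 h1.
have E : (1 - r) * \sum_(j < N) r ^+ j = 1 - r ^+ N.
  elim: N => [|N IH]; first by rewrite big_ord0 expr0 mulr0 subrr.
  by rewrite big_ord_recr /= mulrDr IH exprS; ring.
have hp : 0 < 1 - r by lra.
rewrite -(ler_pM2l hp) E mulfV ?gt_eqF //.
by have := exprn_ge0 N h0; lra.
Qed.

Theorem mainTheorem16 (R : realType) (r r' : R)
  (hr' : 0 < r') (hr'r : r' < r) (hr1 : r < 1)
  (S : topologicalType) (hcpt : compact [set: S]) (hS : hausdorff_space S)
  (hED : extremally_disconnected S)
  (f : S -> R) (hf : continuous f) :
  exists a : int -> S -> int, ZLaurent_r r a /\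
    forall s : S, win_sum (fun n => (a n s)%:~R) r' N @[N --> \oo] --> f s.
Proof.
have cK : compact (f @` setT) := continuous_compact (continuous_subspaceT hf) hcpt.
have [M0 [M0r HM0]] := compact_bounded cK.
have hfM0 : forall s, `|f s| <= `|M0| + 1.
  move=> s; apply: (HM0 (`|M0| + 1)); last by exists s.
  by have := real_ler_norm M0r; lra.
have hinv : 0 < r'^-1 by rewrite invr_gt0.
pose B := `|M0| + 1 + r'^-1.
have B0 : 0 <= B by rewrite /B; have := normr_ge0 M0; lra.
pose M := Num.Def.archi_bound B.
have hMB : B < M%:R := archi_boundP B0.
have hM : r'^-1 <= M%:R by rewrite /B in hMB; have := normr_ge0 M0; lra.
have hfM : forall s, `|f s| <= M%:R.
  move=> s; have := hfM0 s; rewrite /B in hMB; lra.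
pose a (z : int) (s : S) : int :=
  match z with Posz n => approx M (useq M r' f n) s | Negz _ => 0 end.
have hdig := dig_bound hf hED hr' hM hfM.
exists a; split; last first.
  move=> s; rewrite (_ : (fun N => _) = (fun N => f s - r' ^+ N * useq M r' f N s)).
    apply: (@squeeze_cvgr _ _ _ _ (fun N => f s - M%:R * r' ^+ N)
                                 (fun N => f s + M%:R * r' ^+ N)).
    - near=> N.
      have := useq_bound hf hED hr' hM hfM N s; rewrite ler_norml => /andP[h1 h2].
      have hp : 0 <= r' ^+ N by apply: exprn_ge0; lra.
      apply/andP; split; nra.
    - rewrite -[X in _ --> X]subr0; apply: cvgB; first exact: cvg_cst.
      rewrite -(mulr0 M%:R); apply: cvgMr; apply: cvg_expr.
      by rewrite gtr0_norm //; lra.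
    - rewrite -[X in _ --> X]addr0; apply: cvgD; first exact: cvg_cst.
      rewrite -(mulr0 M%:R); apply: cvgMr; apply: cvg_expr.
      by rewrite gtr0_norm //; lra.
  apply: funext => N; rewrite win_sum_pos; last by move=> [n|n] /=; [rewrite ltz_nat | move=> _; rewrite mulr0z].
  exact: partial_sum.
split; [|split].
- case => [n|n] s.
    exact: (approx_lc M hED (useq_cont (M:=M) (rr:=r') (n:=n) hED hf)).
  by apply: nearW.
- by exists 0 => -[n|n] //; rewrite ltz_nat.
- exists ((M%:R + 1) * (1 - r)^-1) => s N.
  rewrite win_sum_pos; last by move=> [n|n] /=; [rewrite ltz_nat | move=> _; rewrite mulr0z normr0].
  apply: le_trans (_ : \sum_(j < N) (M%:R + 1) * r ^+ j <= _).
    apply: ler_sum => j _; apply: ler_wpM2r; first by apply: exprn_ge0; lra.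
    exact: hdig.
  rewrite -mulr_sumr; apply: ler_wpM2l; first by lra.
  apply: geom_bound; lra.
Unshelve. all: by end_near.
Qed.
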